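(* Let $\rho_{ABC}\in\mathcal{S}(\mathcal{H}_{ABC})$, $\tau_{AC}\in\mathcal{S}(\mathcal{H}_{AC})$, $\theta_{BC}\in\mathcal{S}(\mathcal{H}_{BC})$, $\omega_C\in\mathcal{S}(\mathcal{H}_C)$, and suppose $\operatorname{supp}(\rho_{ABC})\subseteq\operatorname{supp}(\tau_{AC})\cap\operatorname{supp}(\theta_{BC})\cap\operatorname{supp}(\omega_C)$. Then for every ordered triple $(X,Y,Z)$ that is a permutation of $(\tau_{AC},\omega_C,\theta_{BC})$, $$\lim_{\alpha\to1}\Delta_\alpha(\rho_{ABC};X,Y,Z)=\Delta(\rho_{ABC},\tau_{AC},\theta_{BC},\omega_C).$$ In particular, $\lim_{\alpha\to1}\Delta_\alpha(\rho_{ABC};\rho_{AC},\rho_C,\rho_{BC})=I(A;B|C)_\rho$.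
   Context: Finite-dimensional Hilbert spaces; natural log; functions of positive semidefinite operators by spectral calculus, with logarithms and negative powers taken on the support only ($A^0$ denotes the projection onto the support). Operators on subsystems are tensored with identities; subscripts denote marginals. $\Delta(\rho_{ABC},\tau_{AC},\theta_{BC},\omega_C)\equiv\operatorname{Tr}\{\rho_{ABC}[\log\rho_{ABC}-\log\tau_{AC}-\log\theta_{BC}+\log\omega_C]\}$; $I(A;B|C)_\rho=H(AC)+H(BC)-H(C)-H(ABC)$. Set $e(\tau_{AC})=e(\theta_{BC})=+1$, $e(\omega_C)=-1$. For an ordered triple $(X,Y,Z)$ that is a permutation of $(\tau_{AC},\omega_C,\theta_{BC})$ and $p\in\mathbb{R}$, let $K_p(X,Y,Z)=X^{pe_X/2}Y^{pe_Y/2}Z^{pe_Z}Y^{pe_Y/2}X^{pe_X/2}$, and define $\Delta_\alpha(\rho_{ABC};X,Y,Z)\equiv\frac{1}{\alpha-1}\log\operatorname{Tr}\{\rho_{ABC}^{\alpha}K_{1-\alpha}(X,Y,Z)\}$. For example $\Delta_\alpha(\rho;\tau,\omega,\theta)=\frac{1}{\alpha-1}\log\operatorname{Tr}\{\rho^\alpha\tau^{(1-\alpha)/2}\omega^{(\alpha-1)/2}\theta^{1-\alpha}\omega^{(\alpha-1)/2}\tau^{(1-\alpha)/2}\}$. *)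

(* Defs.v *)
From Stdlib Require Import Reals Lra ClassicalEpsilon.
Open Scope R_scope.

Record Cplx := mkC { Re : R; Im : R }.
Definition C0 : Cplx := mkC 0 0.
Definition C1 : Cplx := mkC 1 0.
Definition RtoC (x : R) : Cplx := mkC x 0.
Definition Cadd (z w : Cplx) : Cplx := mkC (Re z + Re w) (Im z + Im w).
Definition Copp (z : Cplx) : Cplx := mkC (- Re z) (- Im z).
Definition Cmul (z w : Cplx) : Cplx :=
  mkC (Re z * Re w - Im z * Im w) (Re z * Im w + Im z * Re w).
Definition Cconj (z : Cplx) : Cplx := mkC (Re z) (- Im z).

Fixpoint csum (n : nat) (f : nat -> Cplx) : Cplx :=
  match n with
  | O => C0
  | S m => Cadd (csum m f) (f m)
  end.

(* ---------- matrices on C^n (only entries with indices < n matter) ---------- *)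
Definition Mat := nat -> nat -> Cplx.
Definition Vec := nat -> Cplx.

Definition madd (A B : Mat) : Mat := fun i j => Cadd (A i j) (B i j).
Definition mopp (A : Mat) : Mat := fun i j => Copp (A i j).
Definition mmul (n : nat) (A B : Mat) : Mat :=
  fun i j => csum n (fun k => Cmul (A i k) (B k j)).
Definition mvec (n : nat) (A : Mat) (v : Vec) : Vec :=
  fun i => csum n (fun k => Cmul (A i k) (v k)).
Definition madj (A : Mat) : Mat := fun i j => Cconj (A j i).
Definition mid : Mat := fun i j => if Nat.eqb i j then C1 else C0.
Definition trace (n : nat) (A : Mat) : Cplx := csum n (fun i => A i i).
Definition cinner (n : nat) (v w : Vec) : Cplx :=
  csum n (fun i => Cmul (Cconj (v i)) (w i)).

Definition PSD (n : nat) (A : Mat) : Prop :=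
  forall v : Vec, Im (cinner n v (mvec n A v)) = 0 /\ 0 <= Re (cinner n v (mvec n A v)).
Definition IsState (n : nat) (A : Mat) : Prop :=
  PSD n A /\ trace n A = C1.

Definition unitary (n : nat) (U : Mat) : Prop :=
  forall i j, (i < n)%nat -> (j < n)%nat -> mmul n (madj U) U i j = mid i j.
(* A = U diag(d) U^*  *)
Definition spec_decomp (n : nat) (A : Mat) (Ud : Mat * (nat -> R)) : Prop :=
  unitary n (fst Ud) /\
  forall i j, (i < n)%nat -> (j < n)%nat ->
    A i j = csum n (fun k => Cmul (Cmul (fst Ud i k) (RtoC (snd Ud k))) (Cconj (fst Ud j k))).

Definition inhab_Ud : inhabited (Mat * (nat -> R)) :=
  inhabits ((fun _ _ => C0), (fun _ => 0)).

(* a chosen spectral decomposition (exists for Hermitian, in particular PSD, A) *)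
Definition chosen_decomp (n : nat) (A : Mat) : Mat * (nat -> R) :=
  epsilon inhab_Ud (spec_decomp n A).

Definition mfun (f : R -> R) (n : nat) (A : Mat) : Mat :=
  let Ud := chosen_decomp n A in
  fun i j => csum n (fun k => Cmul (Cmul (fst Ud i k) (RtoC (f (snd Ud k)))) (Cconj (fst Ud j k))).

(* powers and logarithm taken on the support only; t = 0 gives the support projection *)
Definition rpow_supp (t : R) (x : R) : R :=
  if Rlt_dec 0 x then Rpower x t else 0.
Definition ln_supp (x : R) : R :=
  if Rlt_dec 0 x then ln x else 0.
Definition mpow (n : nat) (A : Mat) (t : R) : Mat := mfun (rpow_supp t) n A.
Definition mlog (n : nat) (A : Mat) : Mat := mfun ln_supp n A.

(* support inclusion: supp A ⊆ supp B (supports = ranges) *)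
Definition supp_sub (n : nat) (A B : Mat) : Prop :=
  forall v : Vec, exists w : Vec, forall i, (i < n)%nat -> mvec n A v i = mvec n B w i.

(* ---------- tripartite system H_A ⊗ H_B ⊗ H_C, index (a,b,c) ↦ (a*dB+b)*dC+c ---------- *)
Definition ixA (dA dB dC : nat) (i : nat) : nat := Nat.div i (dB * dC).
Definition ixB (dA dB dC : nat) (i : nat) : nat := Nat.modulo (Nat.div i dC) dB.
Definition ixC (dA dB dC : nat) (i : nat) : nat := Nat.modulo i dC.
Definition ixAC (dA dB dC : nat) (i : nat) : nat := (ixA dA dB dC) i * dC + (ixC dA dB dC) i.
Definition ixBC (dA dB dC : nat) (i : nat) : nat := (ixB dA dB dC) i * dC + (ixC dA dB dC) i.
Definition delta (a b : nat) : Cplx := if Nat.eqb a b then C1 else C0.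

(* X_AC ⊗ 1_B,  1_A ⊗ X_BC,  1_AB ⊗ X_C as operators on ABC *)
Definition extAC (dA dB dC : nat) (X : Mat) : Mat :=
  fun i j => Cmul (X ((ixAC dA dB dC) i) ((ixAC dA dB dC) j)) (delta ((ixB dA dB dC) i) ((ixB dA dB dC) j)).
Definition extBC (dA dB dC : nat) (X : Mat) : Mat :=
  fun i j => Cmul (X ((ixBC dA dB dC) i) ((ixBC dA dB dC) j)) (delta ((ixA dA dB dC) i) ((ixA dA dB dC) j)).
Definition extC (dA dB dC : nat) (X : Mat) : Mat :=
  fun i j => Cmul (X ((ixC dA dB dC) i) ((ixC dA dB dC) j)) (Cmul (delta ((ixA dA dB dC) i) ((ixA dA dB dC) j)) (delta ((ixB dA dB dC) i) ((ixB dA dB dC) j))).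

Definition idx3 (dA dB dC : nat) (a b c : nat) : nat := (a * dB + b) * dC + c.

Definition margAC (dA dB dC : nat) (rho : Mat) : Mat :=
  fun x y => csum dB (fun b =>
    rho ((idx3 dA dB dC) (Nat.div x dC) b (Nat.modulo x dC)) ((idx3 dA dB dC) (Nat.div y dC) b (Nat.modulo y dC))).
Definition margBC (dA dB dC : nat) (rho : Mat) : Mat :=
  fun x y => csum dA (fun a =>
    rho ((idx3 dA dB dC) a (Nat.div x dC) (Nat.modulo x dC)) ((idx3 dA dB dC) a (Nat.div y dC) (Nat.modulo y dC))).
Definition margC (dA dB dC : nat) (rho : Mat) : Mat :=
  fun x y => csum dA (fun a => csum dB (fun b => rho ((idx3 dA dB dC) a b x) ((idx3 dA dB dC) a b y))).

Definition NABC (dA dB dC : nat) := (dA * dB * dC)%nat.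

Definition DeltaQ (dA dB dC : nat) (rho tau theta omega : Mat) : R :=
  Re (trace (NABC dA dB dC) (mmul (NABC dA dB dC) rho
        (madd (madd (madd (mlog (NABC dA dB dC) rho) (mopp ((extAC dA dB dC) (mlog (dA * dC) tau))))
                    (mopp ((extBC dA dB dC) (mlog (dB * dC) theta))))
              ((extC dA dB dC) (mlog dC omega))))).

Inductive slot := sTau | sOmega | sTheta.
Definition esign (s : slot) : R :=
  match s with sTau => 1 | sTheta => 1 | sOmega => -1 end.

Definition slotPow (dA dB dC : nat) (tau theta omega : Mat) (s : slot) (t : R) : Mat :=
  match s with
  | sTau => (extAC dA dB dC) (mpow (dA * dC) tau t)
  | sTheta => (extBC dA dB dC) (mpow (dB * dC) theta t)
  | sOmega => (extC dA dB dC) (mpow dC omega t)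
  end.

Definition Kp (dA dB dC : nat) (tau theta omega : Mat) (X Y Z : slot) (p : R) : Mat :=
  let P := (slotPow dA dB dC) tau theta omega in
  mmul (NABC dA dB dC) (P X (p * esign X / 2))
   (mmul (NABC dA dB dC) (P Y (p * esign Y / 2))
    (mmul (NABC dA dB dC) (P Z (p * esign Z))
     (mmul (NABC dA dB dC) (P Y (p * esign Y / 2)) (P X (p * esign X / 2))))).

Definition DeltaQ_alpha (dA dB dC : nat) (rho tau theta omega : Mat) (X Y Z : slot) (alpha : R) : R :=
  / (alpha - 1) *
  ln (Re (trace (NABC dA dB dC) (mmul (NABC dA dB dC) (mpow (NABC dA dB dC) rho alpha) ((Kp dA dB dC) tau theta omega X Y Z (1 - alpha))))).

Definition entropy (n : nat) (s : Mat) : R := - Re (trace n (mmul n s (mlog n s))).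
Definition CMI (dA dB dC : nat) (rho : Mat) : R :=
  entropy (dA * dC) ((margAC dA dB dC) rho) + entropy (dB * dC) ((margBC dA dB dC) rho)
  - entropy dC ((margC dA dB dC) rho) - entropy (NABC dA dB dC) rho.

(* Main.v *)
Require Import Defs.
From Stdlib Require Import Reals Lra Lia ClassicalEpsilon FunctionalExtensionality.
From mathcomp Require all_boot all_order all_algebra complex Rstruct.
Import Defs.
Open Scope R_scope.

Lemma Ceq (z w : Cplx) : Re z = Re w -> Im z = Im w -> z = w.
Proof. destruct z, w; simpl; intros; subst; reflexivity. Qed.
Ltac ceq := apply Ceq; simpl; ring.

Lemma Cadd_comm z w : Cadd z w = Cadd w z. Proof. ceq. Qed.
Lemma Cadd_assoc z w u : Cadd (Cadd z w) u = Cadd z (Cadd w u). Proof. ceq. Qed.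
Lemma Cmul_comm z w : Cmul z w = Cmul w z. Proof. ceq. Qed.
Lemma Cmul_assoc z w u : Cmul (Cmul z w) u = Cmul z (Cmul w u). Proof. ceq. Qed.
Lemma Cadd_0l z : Cadd C0 z = z. Proof. ceq. Qed.
Lemma Cadd_0r z : Cadd z C0 = z. Proof. ceq. Qed.
Lemma Cmul_0l z : Cmul C0 z = C0. Proof. ceq. Qed.
Lemma Cmul_0r z : Cmul z C0 = C0. Proof. ceq. Qed.
Lemma Cmul_1l z : Cmul C1 z = z. Proof. ceq. Qed.
Lemma Cmul_1r z : Cmul z C1 = z. Proof. ceq. Qed.
Lemma Cmul_addl z w u : Cmul (Cadd z w) u = Cadd (Cmul z u) (Cmul w u). Proof. ceq. Qed.
Lemma Cmul_addr z w u : Cmul u (Cadd z w) = Cadd (Cmul u z) (Cmul u w). Proof. ceq. Qed.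
Lemma Cconj_mul z w : Cconj (Cmul z w) = Cmul (Cconj z) (Cconj w). Proof. ceq. Qed.
Lemma Cconj_add z w : Cconj (Cadd z w) = Cadd (Cconj z) (Cconj w). Proof. ceq. Qed.
Lemma Cconj_invol z : Cconj (Cconj z) = z. Proof. ceq. Qed.
Lemma Cconj_0 : Cconj C0 = C0. Proof. ceq. Qed.
Lemma Cconj_1 : Cconj C1 = C1. Proof. ceq. Qed.
Lemma Cconj_RtoC x : Cconj (RtoC x) = RtoC x. Proof. ceq. Qed.
Lemma RtoC_mul x y : RtoC (x * y) = Cmul (RtoC x) (RtoC y). Proof. ceq. Qed.
Lemma RtoC_add x y : RtoC (x + y) = Cadd (RtoC x) (RtoC y). Proof. ceq. Qed.
Lemma Cconj_delta a b : Cconj (delta a b) = delta a b.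
Proof. unfold delta; destruct (Nat.eqb a b); ceq. Qed.
Lemma delta_sym a b : delta a b = delta b a.
Proof. unfold delta; rewrite Nat.eqb_sym; reflexivity. Qed.
Lemma mid_sym a b : mid a b = mid b a.
Proof. unfold mid; rewrite Nat.eqb_sym; reflexivity. Qed.

Lemma csum_ext n f g : (forall k, (k < n)%nat -> f k = g k) -> csum n f = csum n g.
Proof.
  induction n; intros H; simpl; [reflexivity|].
  rewrite IHn by (intros; apply H; lia). rewrite H by lia. reflexivity.
Qed.
Lemma csum_add n f g : csum n (fun k => Cadd (f k) (g k)) = Cadd (csum n f) (csum n g).
Proof.
  induction n; simpl. ceq. rewrite IHn. apply Ceq; simpl; ring.
Qed.
Lemma csum_mull n c f : csum n (fun k => Cmul c (f k)) = Cmul c (csum n f).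
Proof. induction n; simpl. ceq. rewrite IHn. rewrite Cmul_addr. reflexivity. Qed.
Lemma csum_mulr n c f : csum n (fun k => Cmul (f k) c) = Cmul (csum n f) c.
Proof. induction n; simpl. ceq. rewrite IHn. rewrite Cmul_addl. reflexivity. Qed.
Lemma csum_zero n : csum n (fun _ => C0) = C0.
Proof. induction n; simpl; [reflexivity|]. rewrite IHn; ceq. Qed.
Lemma csum_swap n m (f : nat -> nat -> Cplx) :
  csum n (fun i => csum m (fun j => f i j)) = csum m (fun j => csum n (fun i => f i j)).
Proof.
  induction n; simpl.
  - rewrite csum_zero; reflexivity.
  - rewrite IHn. rewrite <- csum_add. reflexivity.
Qed.
Lemma csum_conj n f : Cconj (csum n f) = csum n (fun k => Cconj (f k)).
Proof. induction n; simpl. ceq. rewrite Cconj_add, IHn. reflexivity. Qed.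
Lemma csum_Re n f : Re (csum n f) = sum_f_R0 (fun k => Re (f k)) n - Re (f n).
Proof. induction n; simpl. lra. rewrite IHn. lra. Qed.

Lemma csum_delta_l n i f : (i < n)%nat -> csum n (fun k => Cmul (delta i k) (f k)) = f i.
Proof.
  induction n; intros Hi; [lia|]. simpl.
  destruct (Nat.eq_dec i n).
  - subst. rewrite csum_ext with (g := fun _ => C0).
    + rewrite csum_zero. unfold delta. rewrite Nat.eqb_refl. ceq.
    + intros k Hk. unfold delta. replace (Nat.eqb n k) with false by (symmetry; apply Nat.eqb_neq; lia). ceq.
  - rewrite IHn by lia. unfold delta. replace (Nat.eqb i n) with false by (symmetry; apply Nat.eqb_neq; lia). ceq.
Qed.
Lemma csum_delta_r n i f : (i < n)%nat -> csum n (fun k => Cmul (f k) (delta k i)) = f i.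
Proof.
  intros. rewrite <- (csum_delta_l n i f H). apply csum_ext; intros. rewrite delta_sym, Cmul_comm; reflexivity.
Qed.

Lemma csum_real_nonneg n f :
  (forall k, (k < n)%nat -> Im (f k) = 0 /\ 0 <= Re (f k)) ->
  Im (csum n f) = 0 /\ 0 <= Re (csum n f).
Proof.
  induction n; intros H; simpl. lra.
  destruct IHn as [A B]. intros; apply H; lia. destruct (H n) as [C D]; [lia|]. lra.
Qed.
Lemma csum_nonneg_zero n f :
  (forall k, (k < n)%nat -> 0 <= Re (f k)) -> Re (csum n f) = 0 ->
  forall k, (k < n)%nat -> Re (f k) = 0.
Proof.
  induction n; intros H H0 k Hk; [lia|]. simpl in H0.
  assert (Hs : 0 <= Re (csum n f)).
  { clear -H. induction n. simpl; lra. simpl. assert (0 <= Re (f n)) by (apply H; lia).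
    assert (0 <= Re (csum n f)) by (apply IHn; intros; apply H; lia). lra. }
  assert (0 <= Re (f n)) by (apply H; lia).
  destruct (Nat.eq_dec k n). subst; lra.
  apply IHn; try lra; try lia. intros; apply H; lia.
Qed.

Definition meq (n : nat) (A B : Mat) : Prop := forall i j, (i < n)%nat -> (j < n)%nat -> A i j = B i j.
Definition mscale (c : Cplx) (A : Mat) : Mat := fun i j => Cmul c (A i j).

Lemma meq_refl n A : meq n A A. Proof. intros i j _ _; reflexivity. Qed.
Lemma meq_sym n A B : meq n A B -> meq n B A. Proof. intros H i j Hi Hj; symmetry; auto. Qed.
Lemma meq_trans n A B C : meq n A B -> meq n B C -> meq n A C.
Proof. intros H1 H2 i j Hi Hj; rewrite H1 by auto; auto. Qed.

Lemma mmul_meq n A A' B B' : meq n A A' -> meq n B B' -> meq n (mmul n A B) (mmul n A' B').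
Proof. intros H1 H2 i j Hi Hj; unfold mmul; apply csum_ext; intros; rewrite H1, H2 by auto; reflexivity. Qed.
Lemma mmul_meq_l n A A' B : meq n A A' -> meq n (mmul n A B) (mmul n A' B).
Proof. intros; apply mmul_meq; auto using meq_refl. Qed.
Lemma mmul_meq_r n A B B' : meq n B B' -> meq n (mmul n A B) (mmul n A B').
Proof. intros; apply mmul_meq; auto using meq_refl. Qed.
Lemma trace_meq n A B : meq n A B -> trace n A = trace n B.
Proof. intros H; unfold trace; apply csum_ext; intros; auto. Qed.

Lemma mmul_assoc n A B C : mmul n (mmul n A B) C = mmul n A (mmul n B C).
Proof.
  extensionality i; extensionality j; unfold mmul.
  transitivity (csum n (fun k => csum n (fun l => Cmul (A i l) (Cmul (B l k) (C k j))))).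
  - apply csum_ext; intros. rewrite <- csum_mulr. apply csum_ext; intros. apply Cmul_assoc.
  - rewrite csum_swap. apply csum_ext; intros. rewrite <- csum_mull. reflexivity.
Qed.
Lemma mmul_addr n A B C : mmul n A (madd B C) = madd (mmul n A B) (mmul n A C).
Proof. extensionality i; extensionality j; unfold mmul, madd. rewrite <- csum_add. apply csum_ext; intros. apply Cmul_addr. Qed.
Lemma mmul_addl n A B C : mmul n (madd A B) C = madd (mmul n A C) (mmul n B C).
Proof. extensionality i; extensionality j; unfold mmul, madd. rewrite <- csum_add. apply csum_ext; intros. apply Cmul_addl. Qed.
Lemma mmul_scaler n c A B : mmul n A (mscale c B) = mscale c (mmul n A B).
Proof. extensionality i; extensionality j; unfold mmul, mscale. rewrite <- csum_mull. apply csum_ext; intros. apply Ceq; simpl; ring. Qed.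
Lemma mmul_scalel n c A B : mmul n (mscale c A) B = mscale c (mmul n A B).
Proof. extensionality i; extensionality j; unfold mmul, mscale. rewrite <- csum_mull. apply csum_ext; intros. apply Ceq; simpl; ring. Qed.
Lemma trace_add n A B : trace n (madd A B) = Cadd (trace n A) (trace n B).
Proof. unfold trace, madd. apply csum_add. Qed.
Lemma trace_scale n c A : trace n (mscale c A) = Cmul c (trace n A).
Proof. unfold trace, mscale. apply csum_mull. Qed.
Lemma trace_opp n A : trace n (mopp A) = Copp (trace n A).
Proof. unfold trace, mopp. induction n; simpl. ceq. rewrite IHn. ceq. Qed.
Lemma mmul_oppr n A B : mmul n A (mopp B) = mopp (mmul n A B).
Proof.
  extensionality i; extensionality j; unfold mmul, mopp. 
  induction n; simpl. ceq. rewrite IHn. ceq.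
Qed.
Lemma trace_cyc n A B : trace n (mmul n A B) = trace n (mmul n B A).
Proof.
  unfold trace, mmul. rewrite csum_swap. apply csum_ext; intros. apply csum_ext; intros. apply Cmul_comm.
Qed.
Lemma madj_mmul n A B : madj (mmul n A B) = mmul n (madj B) (madj A).
Proof.
  extensionality i; extensionality j; unfold madj, mmul. rewrite csum_conj. apply csum_ext; intros.
  rewrite Cconj_mul, Cmul_comm; reflexivity.
Qed.
Lemma madj_invol A : madj (madj A) = A.
Proof. extensionality i; extensionality j; unfold madj. apply Cconj_invol. Qed.
Lemma madj_meq n A B : meq n A B -> meq n (madj A) (madj B).
Proof. intros H i j Hi Hj; unfold madj; rewrite H; auto. Qed.
Lemma mmul_mid_r n A : meq n (mmul n A mid) A.
Proof.
  intros i j Hi Hj; unfold mmul. rewrite <- (csum_delta_r n j (A i)) by auto. apply csum_ext; intros.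
  unfold mid, delta; reflexivity.
Qed.
Lemma mmul_mid_l n A : meq n (mmul n mid A) A.
Proof.
  intros i j Hi Hj; unfold mmul. rewrite <- (csum_delta_l n i (fun k => A k j)) by auto. apply csum_ext; intros.
  unfold mid, delta; reflexivity.
Qed.
Open Scope R_scope.

Definition vec2 (a b : Cplx) (i j : nat) : Vec := fun k => Cadd (Cmul a (delta i k)) (Cmul b (delta j k)).

Lemma quad_vec2 n A a b i j : (i < n)%nat -> (j < n)%nat ->
  cinner n (vec2 a b i j) (mvec n A (vec2 a b i j)) =
  Cadd (Cmul (Cconj a) (Cadd (Cmul (A i i) a) (Cmul (A i j) b)))
       (Cmul (Cconj b) (Cadd (Cmul (A j i) a) (Cmul (A j j) b))).
Proof.
  intros Hi Hj. unfold cinner, mvec, vec2.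
  assert (Hm : forall x, csum n (fun k => Cmul (A x k) (Cadd (Cmul a (delta i k)) (Cmul b (delta j k))))
                 = Cadd (Cmul (A x i) a) (Cmul (A x j) b)).
  { intros x. rewrite (csum_ext n _ (fun k => Cadd (Cmul (delta i k) (Cmul (A x k) a)) (Cmul (delta j k) (Cmul (A x k) b)))).
    - rewrite csum_add. rewrite (csum_delta_l n i (fun k => Cmul (A x k) a)) by auto.
      rewrite (csum_delta_l n j (fun k => Cmul (A x k) b)) by auto. reflexivity.
    - intros; ceq. }
  rewrite (csum_ext n _ (fun x => Cadd (Cmul (delta i x) (Cmul (Cconj a) (Cadd (Cmul (A x i) a) (Cmul (A x j) b))))
                                        (Cmul (delta j x) (Cmul (Cconj b) (Cadd (Cmul (A x i) a) (Cmul (A x j) b)))))).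
  - rewrite csum_add. rewrite (csum_delta_l n i (fun x => (Cmul (Cconj a) (Cadd (Cmul (A x i) a) (Cmul (A x j) b))))) by auto.
    rewrite (csum_delta_l n j (fun x => (Cmul (Cconj b) (Cadd (Cmul (A x i) a) (Cmul (A x j) b))))) by auto. reflexivity.
  - intros x _. rewrite Hm. rewrite Cconj_add, !Cconj_mul, !Cconj_delta.
    apply Ceq; simpl; ring.
Qed.

Lemma PSD_herm n A : PSD n A -> forall i j, (i < n)%nat -> (j < n)%nat -> A j i = Cconj (A i j).
Proof.
  intros H i j Hi Hj.
  destruct (H (vec2 C1 C0 i j)) as [H1 _]. rewrite quad_vec2 in H1 by auto.
  destruct (H (vec2 C0 C1 i j)) as [H2 _]. rewrite quad_vec2 in H2 by auto.
  destruct (H (vec2 C1 C1 i j)) as [H3 _]. rewrite quad_vec2 in H3 by auto.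
  destruct (H (vec2 C1 (mkC 0 1) i j)) as [H4 _]. rewrite quad_vec2 in H4 by auto.
  simpl in *. destruct (A i i), (A i j), (A j i), (A j j). simpl in *.
  apply Ceq; simpl; lra.
Qed.

Module Spec.
Import all_boot all_order all_algebra complex Rstruct.
Import GRing.Theory Num.Theory.
Local Open Scope ring_scope.
Local Open Scope sesquilinear_scope.

Definition toC (z : Cplx) : R[i] := Complex (Defs.Re z) (Defs.Im z).
Definition ofC (x : R[i]) : Cplx := mkC (complex.Re x) (complex.Im x).
Lemma toCK z : ofC (toC z) = z. Proof. by case: z. Qed.
Lemma ofCK x : toC (ofC x) = x. Proof. by case: x. Qed.
Lemma toC_inj z w : toC z = toC w -> z = w.
Proof. by move=> H; rewrite -(toCK z) H toCK. Qed.
Lemma toC_add z w : toC (Cadd z w) = toC z + toC w. Proof. by []. Qed.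
Lemma toC_mul z w : toC (Cmul z w) = toC z * toC w. Proof. by []. Qed.
Lemma toC_conj z : toC (Cconj z) = Num.conj (toC z). Proof. by []. Qed.
Lemma toC_0 : toC Defs.C0 = 0. Proof. by []. Qed.
Lemma toC_csum n f : toC (csum n f) = \sum_(k < n) toC (f k).
Proof.
  elim: n => [|n IH]; first by rewrite big_ord0.
  by rewrite big_ord_recr /= toC_add IH.
Qed.

Lemma spec_exists_mc n (A : Mat) :
  (forall i j, (i < n)%coq_nat -> (j < n)%coq_nat -> A j i = Cconj (A i j)) ->
  exists Ud, spec_decomp n A Ud.
Proof.
  case: n => [|n] Ah.
    exists ((fun _ _ => Defs.C0), (fun _ => 0%R)); split => i j Hi; inversion Hi.
  pose M : 'M[R[i]]_n.+1 := \matrix_(i, j) toC (A i j).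
  have Mh : M ^t Num.conj = M.
    apply/matrixP => i j; rewrite !mxE -toC_conj -Ah //; apply/ltP; done.
  have Mn : M \is spectral.normalmx.
    by rewrite qualifE /= Mh eqxx.
  have Mherm : M \is hermsymmx.
    by rewrite sesquilinear.is_hermitianmxE expr0 scale1r Mh.
  have Preal := spectral.hermitian_spectral_diag_real Mherm.
  move/spectral.orthomx_spectralP: Mn.
  set P := spectral.spectralmx M; set sp := spectral.spectral_diag M => MP.
  have Pu : P \is spectral.unitarymx := spectral.spectral_unitarymx M.
  rewrite spectral.invmx_unitary // in MP.
  pose U : Mat := fun i k => ofC ((P ^t Num.conj) (inord i) (inord k)).
  pose d : nat -> R := fun k => complex.Re (sp 0 (inord k)).
  exists (U, d); split; rewrite /fst /snd.
  - move=> i j Hi Hj. apply: toC_inj.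
    rewrite /mmul toC_csum.
    have -> : toC (mid i j) = (1%:M : 'M[R[i]]_n.+1) (inord i) (inord j).
      rewrite mxE /mid; case: (PeanoNat.Nat.eqb_spec i j) => [->|Hne]; first by rewrite eqxx.
      case: eqP => // /(congr1 val) /=; rewrite !inordK //; move/ltP: Hi; move/ltP: Hj; done.
    move/spectral.unitarymxP: Pu => <-.
    rewrite mxE; apply: eq_bigr => k _.
    rewrite toC_mul /madj toC_conj /U !ofCK !mxE /= Num.Theory.conjCK mulrC.
    by rewrite (inord_val k) mulrC.
  - move=> i j Hi Hj. apply: toC_inj.
    rewrite toC_csum.
    have -> : toC (A i j) = M (inord i) (inord j).
      by rewrite mxE !inordK //; [apply/ltP | apply/ltP].
    rewrite MP mxE; apply: eq_bigr => k _.
    rewrite !toC_mul toC_conj /U !ofCK mul_mx_diag !mxE Num.Theory.conjCK !inord_val.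
    congr (_ * _ * _).
    have /mxOverP/(_ 0 k) := Preal.
    rewrite /toC /d /= => Hr.
    have HI : complex.Im (sp 0 k) = 0.
      have := complexIm (sp 0 k); rewrite (elimT (Num.Theory.Creal_ImP _) Hr).
      by move/(congr1 (@complex.Re _)).
    rewrite /RtoC /toC /= inord_val.
    by move: HI; case: (sp 0 k) => a b /= ->.
Qed.
End Spec.
Open Scope R_scope.

Lemma chosen_ok n A : PSD n A -> spec_decomp n A (chosen_decomp n A).
Proof.
  intros H. unfold chosen_decomp. apply ClassicalEpsilon.epsilon_spec.
  apply Spec.spec_exists_mc. intros; apply (PSD_herm n); auto.
Qed.

Definition cU n A := fst (chosen_decomp n A).
Definition cd n A := snd (chosen_decomp n A).
Definition Dg (f : R -> R) (d : nat -> R) : Mat := fun i j => Cmul (delta i j) (RtoC (f (d i))).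

Lemma mfun_repr f n A : mfun f n A = mmul n (mmul n (cU n A) (Dg f (cd n A))) (madj (cU n A)).
Proof.
  extensionality i; extensionality j. unfold mfun, mmul. fold (cU n A) (cd n A).
  apply csum_ext; intros k Hk. f_equal.
  rewrite (csum_ext n _ (fun l => Cmul (Cmul (cU n A i l) (RtoC (f (cd n A l)))) (delta l k))).
  - rewrite (csum_delta_r n k (fun l => Cmul (cU n A i l) (RtoC (f (cd n A l))))) by auto. reflexivity.
  - intros; ceq.
Qed.

Lemma cU_unitary n A : PSD n A -> meq n (mmul n (madj (cU n A)) (cU n A)) mid.
Proof. intros H. destruct (chosen_ok n A H) as [Hu _]. exact Hu. Qed.

Lemma mfun_id n A : PSD n A -> meq n A (mfun (fun x => x) n A).
Proof. intros H. destruct (chosen_ok n A H) as [_ Hs]. intros i j Hi Hj. rewrite Hs by auto. reflexivity. Qed.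

Lemma Dg_mul n f g d : meq n (mmul n (Dg f d) (Dg g d)) (Dg (fun x => f x * g x) d).
Proof.
  intros i j Hi Hj. unfold mmul, Dg.
  rewrite (csum_ext n _ (fun k => Cmul (delta i k) (Cmul (RtoC (f (d i))) (Cmul (delta k j) (RtoC (g (d k))))))).
  - rewrite (csum_delta_l n i (fun k => Cmul (RtoC (f (d i))) (Cmul (delta k j) (RtoC (g (d k)))))) by auto.
    rewrite RtoC_mul. ceq.
  - intros; ceq.
Qed.

Lemma mfun_mul n A f g : PSD n A ->
  meq n (mmul n (mfun f n A) (mfun g n A)) (mfun (fun x => f x * g x) n A).
Proof.
  intros H. rewrite !mfun_repr. set (U := cU n A). set (d := cd n A).
  rewrite !mmul_assoc.
  rewrite <- (mmul_assoc n (madj U) U).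
  apply mmul_meq_r.
  eapply meq_trans. apply mmul_meq_r. apply mmul_meq_l. apply cU_unitary; auto. fold U.
  eapply meq_trans. apply mmul_meq_r. apply mmul_mid_l.
  rewrite <- mmul_assoc. apply mmul_meq_l. apply Dg_mul.
Qed.

Lemma mfun_ext n A f g : (forall k, (k < n)%nat -> f (cd n A k) = g (cd n A k)) -> mfun f n A = mfun g n A.
Proof.
  intros H. extensionality i; extensionality j. unfold mfun. fold (cd n A).
  apply csum_ext; intros; rewrite H; auto.
Qed.

Lemma madj_mfun f n A : madj (mfun f n A) = mfun f n A.
Proof.
  extensionality i; extensionality j. unfold madj, mfun. rewrite csum_conj. apply csum_ext; intros.
  rewrite !Cconj_mul, Cconj_invol, Cconj_RtoC. ceq.
Qed.

Lemma trace_Dg n f d : trace n (Dg f d) = csum n (fun k => RtoC (f (d k))).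
Proof. unfold trace, Dg. apply csum_ext; intros. unfold delta; rewrite Nat.eqb_refl. ceq. Qed.

Lemma trace_mfun n A f : PSD n A -> trace n (mfun f n A) = csum n (fun k => RtoC (f (cd n A k))).
Proof.
  intros H. rewrite mfun_repr. rewrite trace_cyc. rewrite <- mmul_assoc.
  rewrite (trace_meq n _ (mmul n mid (Dg f (cd n A)))).
  - rewrite (trace_meq n _ (Dg f (cd n A))) by apply mmul_mid_l. apply trace_Dg.
  - apply mmul_meq_l. apply cU_unitary; auto.
Qed.

Lemma cd_nonneg n A : PSD n A -> forall k, (k < n)%nat -> 0 <= cd n A k.
Proof.
  intros H k Hk. set (U := cU n A).
  destruct (H (fun i => U i k)) as [_ H2].
  assert (E : cinner n (fun i => U i k) (mvec n A (fun i => U i k)) = mmul n (madj U) (mmul n A U) k k) by reflexivity.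
  rewrite E in H2. clear E.
  assert (E2 : meq n (mmul n (madj U) (mmul n A U)) (Dg (fun x => x) (cd n A))).
  { eapply meq_trans. apply mmul_meq_r. apply mmul_meq_l. apply mfun_id; auto.
    rewrite mfun_repr. fold U. rewrite !mmul_assoc. rewrite <- (mmul_assoc n (madj U) U).
    eapply meq_trans. apply mmul_meq_l. apply cU_unitary; auto. eapply meq_trans. apply mmul_mid_l.
    eapply meq_trans. apply mmul_meq_r. apply cU_unitary; auto. apply mmul_mid_r. }
  rewrite E2 in H2 by auto. unfold Dg, delta in H2. rewrite Nat.eqb_refl in H2. simpl in H2. lra.
Qed.
Open Scope R_scope.

Definition gext (s r : nat -> nat) (X : Mat) : Mat := fun i j => Cmul (X (s i) (s j)) (delta (r i) (r j)).
Definition pmarg (k : nat) (g : nat -> nat -> nat) (R : Mat) : Mat :=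
  fun x y => csum k (fun z => R (g x z) (g y z)).

Definition Bij (N m k : nat) (s r : nat -> nat) (g : nat -> nat -> nat) : Prop :=
  (forall i, (i < N)%nat -> (s i < m)%nat /\ (r i < k)%nat /\ g (s i) (r i) = i) /\
  (forall x y, (x < m)%nat -> (y < k)%nat -> (g x y < N)%nat /\ s (g x y) = x /\ r (g x y) = y).

Lemma delta_eq a b : a = b -> delta a b = C1.
Proof. intros ->; unfold delta; rewrite Nat.eqb_refl; reflexivity. Qed.
Lemma delta_neq a b : a <> b -> delta a b = C0.
Proof. intros H; unfold delta; apply Nat.eqb_neq in H; rewrite H; reflexivity. Qed.

Section G.
Variables (N m k : nat) (s r : nat -> nat) (g : nat -> nat -> nat).
Hypothesis HB : Bij N m k s r g.

Lemma delta_g i x y : (i < N)%nat -> (x < m)%nat -> (y < k)%nat ->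
  delta i (g x y) = Cmul (delta (s i) x) (delta (r i) y).
Proof.
  intros Hi Hx Hy. destruct HB as [H1 H2]. destruct (H1 i Hi) as [A1 [A2 A3]]. destruct (H2 x y Hx Hy) as [B1 [B2 B3]].
  destruct (Nat.eq_dec i (g x y)) as [E|E].
  - rewrite (delta_eq _ _ E). rewrite E, B2, B3. rewrite !delta_eq by auto. ceq.
  - rewrite (delta_neq _ _ E).
    destruct (Nat.eq_dec (s i) x) as [E1|E1]; [destruct (Nat.eq_dec (r i) y) as [E2|E2]|].
    + exfalso. apply E. rewrite <- E1, <- E2. auto.
    + rewrite (delta_neq _ _ E2). ceq.
    + rewrite (delta_neq _ _ E1). ceq.
Qed.

Lemma reindex F : csum N F = csum m (fun x => csum k (fun y => F (g x y))).
Proof.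
  destruct HB as [H1 H2].
  rewrite (csum_ext m _ (fun x => csum k (fun y => csum N (fun i => Cmul (F i) (delta i (g x y)))))).
  2:{ intros x Hx. apply csum_ext; intros y Hy. rewrite csum_delta_r; auto. apply H2; auto. }
  rewrite (csum_ext m _ (fun x => csum N (fun i => csum k (fun y => Cmul (F i) (delta i (g x y)))))).
  2:{ intros; apply csum_swap. }
  rewrite csum_swap. apply csum_ext; intros i Hi.
  destruct (H1 i Hi) as [A1 [A2 A3]].
  rewrite (csum_ext m _ (fun x => Cmul (delta (s i) x) (F i))).
  - symmetry. apply (csum_delta_l m (s i) (fun _ => F i)); auto.
  - intros x Hx. rewrite (csum_ext k _ (fun y => Cmul (delta (s i) x) (Cmul (delta (r i) y) (F i)))).
    + rewrite csum_mull. rewrite (csum_delta_l k (r i) (fun _ => F i)); auto.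
    + intros y Hy. rewrite delta_g; auto. ceq.
Qed.

Lemma gext_mul X Y : meq N (mmul N (gext s r X) (gext s r Y)) (gext s r (mmul m X Y)).
Proof.
  intros i j Hi Hj. destruct HB as [H1 H2]. destruct (H1 i Hi) as [A1 [A2 A3]]. destruct (H1 j Hj) as [B1 [B2 B3]].
  unfold mmul at 1. rewrite reindex. unfold gext, mmul. rewrite <- csum_mulr. apply csum_ext; intros x Hx.
  rewrite (csum_ext k _ (fun z => Cmul (delta (r i) z) (Cmul (Cmul (X (s i) x) (Y x (s j))) (delta z (r j))))).
  - rewrite (csum_delta_l k (r i) (fun z => Cmul (Cmul (X (s i) x) (Y x (s j))) (delta z (r j)))); auto.
  - intros z Hz. destruct (H2 x z Hx Hz) as [C1 [C2 C3]]. rewrite C2, C3. ceq.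
Qed.

Lemma ptrace R L : trace N (mmul N R (gext s r L)) = trace m (mmul m (pmarg k g R) L).
Proof.
  destruct HB as [H1 H2]. unfold trace, mmul, gext, pmarg.
  rewrite reindex.
  apply csum_ext; intros x Hx.
  rewrite (csum_ext k _ (fun z => csum m (fun y => Cmul (R (g x z) (g y z)) (L y x)))).
  - rewrite csum_swap. apply csum_ext; intros y Hy. rewrite csum_mulr. reflexivity.
  - intros z Hz. destruct (H2 x z Hx Hz) as [C1 [C2 C3]]. rewrite reindex. apply csum_ext; intros y Hy.
    rewrite (csum_ext k _ (fun w => Cmul (Cmul (R (g x z) (g y w)) (L y x)) (delta w z))).
    + rewrite (csum_delta_r k z (fun w => Cmul (R (g x z) (g y w)) (L y x))); auto.
    + intros w Hw. destruct (H2 y w Hy Hw) as [D1 [D2 D3]]. rewrite C2, C3, D2, D3. ceq.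
Qed.

Lemma gext_mid : meq N (gext s r mid) mid.
Proof.
  intros i j Hi Hj. destruct HB as [H1 H2]. destruct (H1 i Hi) as [A1 [A2 A3]]. destruct (H1 j Hj) as [B1 [B2 B3]].
  unfold gext, mid. destruct (Nat.eq_dec i j) as [E|E].
  - subst. rewrite !Nat.eqb_refl. rewrite delta_eq by auto. ceq.
  - replace (Nat.eqb i j) with false by (symmetry; apply Nat.eqb_neq; auto).
    destruct (Nat.eq_dec (s i) (s j)) as [E1|E1].
    + rewrite E1, Nat.eqb_refl. rewrite delta_neq. ceq. intros E2. apply E. rewrite <- A3, <- B3, E1, E2. reflexivity.
    + replace (Nat.eqb (s i) (s j)) with false by (symmetry; apply Nat.eqb_neq; auto). ceq.
Qed.

Lemma pmarg_trace R : trace m (pmarg k g R) = trace N R.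
Proof. unfold trace, pmarg. rewrite reindex. reflexivity. Qed.

Lemma pmarg_quad R v z : (z < k)%nat ->
  cinner N (fun i => Cmul (v (s i)) (delta (r i) z)) (mvec N R (fun i => Cmul (v (s i)) (delta (r i) z)))
  = csum m (fun x => Cmul (Cconj (v x)) (csum m (fun y => Cmul (R (g x z) (g y z)) (v y)))).
Proof.
  intros Hz. destruct HB as [H1 H2]. unfold cinner, mvec. rewrite reindex. apply csum_ext; intros x Hx.
  rewrite (csum_ext k _ (fun z' => Cmul (delta z z') (Cmul (Cconj (v x)) (csum N (fun k0 => Cmul (R (g x z') k0) (Cmul (v (s k0)) (delta (r k0) z))))))).
  - rewrite (csum_delta_l k z (fun z' => (Cmul (Cconj (v x)) (csum N (fun k0 => Cmul (R (g x z') k0) (Cmul (v (s k0)) (delta (r k0) z))))))); auto.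
    f_equal. rewrite reindex. apply csum_ext; intros y Hy.
    rewrite (csum_ext k _ (fun w => Cmul (Cmul (R (g x z) (g y w)) (v y)) (delta w z))).
    + rewrite (csum_delta_r k z (fun w => Cmul (R (g x z) (g y w)) (v y))); auto.
    + intros w Hw. destruct (H2 y w Hy Hw) as [D1 [D2 D3]]. rewrite D2, D3. ceq.
  - intros z' Hz'. destruct (H2 x z' Hx Hz') as [C1 [C2 C3]]. rewrite C2, C3.
    rewrite Cconj_mul, Cconj_delta, delta_sym. ceq.
Qed.

Lemma pmarg_PSD R : PSD N R -> PSD m (pmarg k g R).
Proof.
  intros HR v.
  assert (E : cinner m v (mvec m (pmarg k g R) v) =
     csum k (fun z => cinner N (fun i => Cmul (v (s i)) (delta (r i) z)) (mvec N R (fun i => Cmul (v (s i)) (delta (r i) z))))).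
  { rewrite (csum_ext k _ (fun z => csum m (fun x => Cmul (Cconj (v x)) (csum m (fun y => Cmul (R (g x z) (g y z)) (v y)))))).
    2:{ intros; apply pmarg_quad; auto. }
    rewrite csum_swap. unfold cinner, mvec, pmarg. apply csum_ext; intros x Hx.
    rewrite csum_mull. f_equal. rewrite csum_swap. apply csum_ext; intros y Hy. rewrite csum_mulr. reflexivity. }
  rewrite E. apply csum_real_nonneg. intros; apply HR.
Qed.

Lemma gext_meq X X' : meq m X X' -> meq N (gext s r X) (gext s r X').
Proof.
  intros H i j Hi Hj. destruct HB as [H1 H2]. destruct (H1 i Hi) as [A1 _]. destruct (H1 j Hj) as [B1 _].
  unfold gext. rewrite H; auto.
Qed.
End G.

Lemma gext_add s r X Y : gext s r (madd X Y) = madd (gext s r X) (gext s r Y).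
Proof. extensionality i; extensionality j; unfold gext, madd. ceq. Qed.
Lemma gext_scale s r c X : gext s r (mscale c X) = mscale c (gext s r X).
Proof. extensionality i; extensionality j; unfold gext, mscale. ceq. Qed.
Lemma gext_opp s r X : gext s r (mopp X) = mopp (gext s r X).
Proof. extensionality i; extensionality j; unfold gext, mopp. ceq. Qed.
Lemma gext_madj s r X : madj (gext s r X) = gext s r (madj X).
Proof. extensionality i; extensionality j; unfold gext, madj. rewrite Cconj_mul, Cconj_delta, delta_sym. reflexivity. Qed.
Open Scope nat_scope.

Lemma dm q a c : (c < q)%nat -> (a * q + c) / q = a /\ (a * q + c) mod q = c.
Proof.
  intros H. split.
  - symmetry. apply (Nat.div_unique _ q a c); lia.
  - symmetry. apply (Nat.mod_unique _ q a c); lia.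
Qed.

Lemma dm_split q x : q <> 0%nat -> x = (x / q) * q + x mod q /\ (x mod q < q)%nat.
Proof. intros H. split. rewrite (Nat.div_mod_eq x q) at 1. lia. apply Nat.mod_upper_bound; auto. Qed.

Lemma idx3_props dA dB dC a b c : (a < dA)%nat -> (b < dB)%nat -> (c < dC)%nat ->
  ixA dA dB dC (idx3 dA dB dC a b c) = a /\ ixB dA dB dC (idx3 dA dB dC a b c) = b /\
  ixC dA dB dC (idx3 dA dB dC a b c) = c /\ (idx3 dA dB dC a b c < NABC dA dB dC)%nat.
Proof.
  intros Ha Hb Hc. unfold ixA, ixB, ixC, idx3, NABC.
  destruct (dm dC (a * dB + b) c Hc) as [E1 E2].
  destruct (dm dB a b Hb) as [F1 F2].
  rewrite (Nat.mul_comm dB dC), <- Nat.Div0.div_div. rewrite E1, E2, F1, F2. repeat split; auto. assert (a * dB + b < dA * dB) by nia. nia.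
Qed.

Lemma ix_props dA dB dC i : (i < NABC dA dB dC)%nat ->
  (ixA dA dB dC i < dA)%nat /\ (ixB dA dB dC i < dB)%nat /\ (ixC dA dB dC i < dC)%nat /\
  idx3 dA dB dC (ixA dA dB dC i) (ixB dA dB dC i) (ixC dA dB dC i) = i.
Proof.
  intros Hi. unfold NABC in Hi. assert (dB <> 0%nat) by (intro; subst; lia). assert (dC <> 0%nat) by (intro; subst; lia).
  unfold ixA, ixB, ixC, idx3. rewrite (Nat.mul_comm dB dC), <- Nat.Div0.div_div.
  destruct (dm_split dC i) as [E1 E2]; auto.
  destruct (dm_split dB (i / dC)) as [F1 F2]; auto.
  repeat split; auto.
  - apply Nat.div_lt_upper_bound; auto. apply Nat.div_lt_upper_bound; auto. nia.
  - lia.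
Qed.

Lemma Bij_AC dA dB dC : Bij (NABC dA dB dC) (dA * dC) dB (ixAC dA dB dC) (ixB dA dB dC)
   (fun x y => idx3 dA dB dC (x / dC) y (x mod dC)).
Proof.
  split.
  - intros i Hi. destruct (ix_props dA dB dC i Hi) as [A1 [A2 [A3 A4]]]. unfold ixAC.
    destruct (dm dC (ixA dA dB dC i) (ixC dA dB dC i) A3) as [E1 E2]. rewrite E1, E2. repeat split; auto; try nia.
  - intros x y Hx Hy. assert (dC <> 0%nat) by (intro; subst; lia).
    destruct (dm_split dC x) as [E1 E2]; auto.
    assert (x / dC < dA)%nat by (apply Nat.div_lt_upper_bound; lia).
    destruct (idx3_props dA dB dC (x / dC) y (x mod dC)) as [B1 [B2 [B3 B4]]]; auto.
    unfold ixAC. rewrite B1, B3. repeat split; auto; try lia.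
Qed.

Lemma Bij_BC dA dB dC : Bij (NABC dA dB dC) (dB * dC) dA (ixBC dA dB dC) (ixA dA dB dC)
   (fun x y => idx3 dA dB dC y (x / dC) (x mod dC)).
Proof.
  split.
  - intros i Hi. destruct (ix_props dA dB dC i Hi) as [A1 [A2 [A3 A4]]]. unfold ixBC.
    destruct (dm dC (ixB dA dB dC i) (ixC dA dB dC i) A3) as [E1 E2]. rewrite E1, E2. repeat split; auto; try nia.
  - intros x y Hx Hy. assert (dC <> 0%nat) by (intro; subst; lia).
    destruct (dm_split dC x) as [E1 E2]; auto.
    assert (x / dC < dB)%nat by (apply Nat.div_lt_upper_bound; lia).
    destruct (idx3_props dA dB dC y (x / dC) (x mod dC)) as [B1 [B2 [B3 B4]]]; auto.
    unfold ixBC. rewrite B2, B3. repeat split; auto; try lia.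
Qed.

Definition ixAB (dA dB dC : nat) (i : nat) : nat := (ixA dA dB dC i * dB + ixB dA dB dC i)%nat.

Lemma Bij_C dA dB dC : Bij (NABC dA dB dC) dC (dA * dB) (ixC dA dB dC) (ixAB dA dB dC)
   (fun x y => idx3 dA dB dC (y / dB) (y mod dB) x).
Proof.
  split.
  - intros i Hi. destruct (ix_props dA dB dC i Hi) as [A1 [A2 [A3 A4]]]. unfold ixAB.
    destruct (dm dB (ixA dA dB dC i) (ixB dA dB dC i) A2) as [E1 E2]. rewrite E1, E2. repeat split; auto; try nia.
  - intros x y Hx Hy. assert (dB <> 0%nat) by (intro; subst; lia).
    destruct (dm_split dB y) as [E1 E2]; auto.
    assert (y / dB < dA)%nat by (apply Nat.div_lt_upper_bound; lia).
    destruct (idx3_props dA dB dC (y / dB) (y mod dB) x) as [B1 [B2 [B3 B4]]]; auto.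
    unfold ixAB. rewrite B1, B2, B3. repeat split; auto; try lia.
Qed.

Lemma Bij_prod dA dB : Bij (dA * dB) dA dB (fun y => y / dB)%nat (fun y => y mod dB)%nat (fun a b => a * dB + b)%nat.
Proof.
  split.
  - intros i Hi. assert (dB <> 0%nat) by (intro; subst; lia).
    destruct (dm_split dB i) as [E1 E2]; auto. repeat split; auto.
    apply Nat.div_lt_upper_bound; lia. 
  - intros x y Hx Hy. destruct (dm dB x y Hy) as [E1 E2]. repeat split; auto; try nia.
Qed.

Lemma extAC_g dA dB dC X : extAC dA dB dC X = gext (ixAC dA dB dC) (ixB dA dB dC) X.
Proof. reflexivity. Qed.
Lemma extBC_g dA dB dC X : extBC dA dB dC X = gext (ixBC dA dB dC) (ixA dA dB dC) X.
Proof. reflexivity. Qed.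
Lemma extC_g dA dB dC X : meq (NABC dA dB dC) (extC dA dB dC X) (gext (ixC dA dB dC) (ixAB dA dB dC) X).
Proof.
  intros i j Hi Hj. destruct (ix_props dA dB dC i Hi) as [A1 [A2 [A3 A4]]]. destruct (ix_props dA dB dC j Hj) as [B1 [B2 [B3 B4]]].
  unfold extC, gext, ixAB. f_equal.
  destruct (Nat.eq_dec (ixA dA dB dC i) (ixA dA dB dC j)) as [E|E];
  [destruct (Nat.eq_dec (ixB dA dB dC i) (ixB dA dB dC j)) as [F|F]|].
  - rewrite E, F, !delta_eq by auto. ceq.
  - rewrite (delta_neq _ _ F), (delta_neq (_ + _)). ceq.
    intros H. destruct (dm dB (ixA dA dB dC i) (ixB dA dB dC i) A2) as [_ G1].
    destruct (dm dB (ixA dA dB dC j) (ixB dA dB dC j) B2) as [_ G2]. apply F. rewrite <- G1, <- G2, H. reflexivity.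
  - rewrite (delta_neq _ _ E), (delta_neq (_ + _)). ceq.
    intros H. destruct (dm dB (ixA dA dB dC i) (ixB dA dB dC i) A2) as [G1 _].
    destruct (dm dB (ixA dA dB dC j) (ixB dA dB dC j) B2) as [G2 _]. apply E. rewrite <- G1, <- G2, H. reflexivity.
Qed.

Lemma margAC_g dA dB dC R : margAC dA dB dC R = pmarg dB (fun x y => idx3 dA dB dC (x / dC) y (x mod dC)) R.
Proof. reflexivity. Qed.
Lemma margBC_g dA dB dC R : margBC dA dB dC R = pmarg dA (fun x y => idx3 dA dB dC y (x / dC) (x mod dC)) R.
Proof. reflexivity. Qed.
Lemma margC_g dA dB dC R : margC dA dB dC R = pmarg (dA * dB) (fun x y => idx3 dA dB dC (y / dB) (y mod dB) x) R.
Proof.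
  extensionality x; extensionality y. unfold margC, pmarg.
  rewrite (reindex _ _ _ _ _ _ (Bij_prod dA dB)). apply csum_ext; intros a Ha. apply csum_ext; intros b Hb.
  destruct (dm dB a b Hb) as [E1 E2]. rewrite E1, E2. reflexivity.
Qed.
Open Scope R_scope.

Definition cD (f : R -> Cplx) (f' : Cplx) : Prop :=
  derivable_pt_lim (fun a => Re (f a)) 1 (Re f') /\ derivable_pt_lim (fun a => Im (f a)) 1 (Im f').

Lemma cD_eqd f d d' : cD f d -> d = d' -> cD f d'. Proof. intros H ->; auto. Qed.
Lemma cD_ext f g d : (forall a, f a = g a) -> cD f d -> cD g d.
Proof. intros H. replace g with f; auto. extensionality a; auto. Qed.

Lemma cD_const c : cD (fun _ => c) C0.
Proof. split; simpl; apply derivable_pt_lim_const. Qed.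

Lemma cD_add f g f' g' : cD f f' -> cD g g' -> cD (fun a => Cadd (f a) (g a)) (Cadd f' g').
Proof.
  intros [H1 H2] [H3 H4]; split; simpl.
  - apply (derivable_pt_lim_plus (fun a => Re (f a)) (fun a => Re (g a))); auto.
  - apply (derivable_pt_lim_plus (fun a => Im (f a)) (fun a => Im (g a))); auto.
Qed.

Lemma cD_mul f g f' g' : cD f f' -> cD g g' ->
  cD (fun a => Cmul (f a) (g a)) (Cadd (Cmul f' (g 1)) (Cmul (f 1) g')).
Proof.
  intros [H1 H2] [H3 H4]; split; simpl.
  - pose proof (derivable_pt_lim_mult _ _ _ _ _ H1 H3) as A.
    pose proof (derivable_pt_lim_mult _ _ _ _ _ H2 H4) as B.
    pose proof (derivable_pt_lim_minus _ _ _ _ _ A B) as C.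
    unfold minus_fct, mult_fct in C. 
    replace (Re f' * Re (g 1) - Im f' * Im (g 1) + (Re (f 1) * Re g' - Im (f 1) * Im g'))
      with (Re f' * Re (g 1) + Re (f 1) * Re g' - (Im f' * Im (g 1) + Im (f 1) * Im g')) by ring.
    exact C.
  - pose proof (derivable_pt_lim_mult _ _ _ _ _ H1 H4) as A.
    pose proof (derivable_pt_lim_mult _ _ _ _ _ H2 H3) as B.
    pose proof (derivable_pt_lim_plus _ _ _ _ _ A B) as C.
    unfold plus_fct, mult_fct in C.
    replace (Re f' * Im (g 1) + Im f' * Re (g 1) + (Re (f 1) * Im g' + Im (f 1) * Re g'))
      with (Re f' * Im (g 1) + Re (f 1) * Im g' + (Im f' * Re (g 1) + Im (f 1) * Re g')) by ring.
    exact C.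
Qed.

Lemma cD_csum n f f' : (forall k, (k < n)%nat -> cD (fun a => f a k) (f' k)) ->
  cD (fun a => csum n (f a)) (csum n f').
Proof.
  induction n; intros H; simpl.
  - apply cD_const.
  - apply cD_add. apply IHn; intros; apply H; lia. apply H; lia.
Qed.

Lemma cD_real h h' : derivable_pt_lim h 1 h' -> cD (fun a => RtoC (h a)) (RtoC h').
Proof. intros H; split; simpl; auto. apply derivable_pt_lim_const. Qed.

Definition MDv (n : nat) (F : R -> Mat) (F1 F' : Mat) : Prop :=
  meq n (F 1) F1 /\ (forall i j, (i < n)%nat -> (j < n)%nat -> cD (fun a => F a i j) (F' i j)).

Lemma MDv_mul n F G F1 G1 F' G' : MDv n F F1 F' -> MDv n G G1 G' ->
  MDv n (fun a => mmul n (F a) (G a)) (mmul n F1 G1) (madd (mmul n F' G1) (mmul n F1 G')).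
Proof.
  intros [HF1 HF] [HG1 HG]. split.
  - apply mmul_meq; auto.
  - intros i j Hi Hj. unfold mmul at 1. unfold madd, mmul. rewrite <- csum_add.
    apply cD_csum. intros k Hk. eapply cD_eqd. apply cD_mul; auto.
    cbv beta. rewrite HF1, HG1 by auto. reflexivity.
Qed.

Lemma MDv_meq n F G F1 F' : (forall a, meq n (F a) (G a)) -> MDv n F F1 F' -> MDv n G F1 F'.
Proof.
  intros H [H1 H2]. split.
  - eapply meq_trans; [apply meq_sym, H|auto].
  - intros i j Hi Hj. eapply cD_ext; [|apply H2; auto]. intros a; apply H; auto.
Qed.

Lemma MDv_trace n F F1 F' : MDv n F F1 F' ->
  derivable_pt_lim (fun a => Re (trace n (F a))) 1 (Re (trace n F')).
Proof.
  intros [_ H]. unfold trace. apply cD_csum. intros; apply H; auto.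
Qed.

Lemma trace_val n F F1 F' : MDv n F F1 F' -> trace n (F 1) = trace n F1.
Proof. intros [H _]. apply trace_meq; auto. Qed.

Lemma rpow_deriv x t t' : derivable_pt_lim t 1 t' ->
  derivable_pt_lim (fun a => rpow_supp (t a) x) 1 (t' * (ln_supp x * rpow_supp (t 1) x)).
Proof.
  intros Ht. unfold rpow_supp, ln_supp. destruct (Rlt_dec 0 x) as [Hx|Hx].
  - unfold Rpower.
    pose proof (derivable_pt_lim_scal t (ln x) 1 t' Ht) as A.
    pose proof (derivable_pt_lim_comp (fun a => ln x * t a) exp 1 _ (exp (ln x * t 1)) A (derivable_pt_lim_exp _)) as B.
    unfold comp, mult_real_fct in B.
    replace (t' * (ln x * exp (t 1 * ln x))) with (exp (ln x * t 1) * (ln x * t')).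
    + replace (fun a => exp (t a * ln x)) with (fun a => exp (ln x * t a)) by (extensionality a; f_equal; ring). exact B.
    + replace (ln x * t 1) with (t 1 * ln x) by ring. ring.
  - replace (t' * (0 * 0)) with 0 by ring. apply derivable_pt_lim_const.
Qed.

Lemma MDv_mfunpow n A t t' : derivable_pt_lim t 1 t' ->
  MDv n (fun a => mpow n A (t a)) (mpow n A (t 1)) (mfun (fun x => t' * (ln_supp x * rpow_supp (t 1) x)) n A).
Proof.
  intros Ht. split. apply meq_refl.
  intros i j Hi Hj. unfold mpow, mfun. apply cD_csum. intros k Hk.
  eapply cD_eqd. apply cD_mul. apply cD_mul. apply cD_const. apply cD_real. apply rpow_deriv; eauto.
  apply cD_const. ceq.
Qed.

Lemma MDv_gext N m k s r g F F1 F' : Bij N m k s r g -> MDv m F F1 F' ->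
  MDv N (fun a => gext s r (F a)) (gext s r F1) (gext s r F').
Proof.
  intros HB [H1 H2]. split.
  - apply (gext_meq N m k s r g HB); auto.
  - intros i j Hi Hj. destruct HB as [B1 _]. destruct (B1 i Hi) as [A1 _]. destruct (B1 j Hj) as [A2 _].
    unfold gext. eapply cD_eqd. apply cD_mul. apply H2; auto. apply cD_const. ceq.
Qed.
Open Scope R_scope.

Section TR.
Variable N : nat.
Local Notation "A ** B" := (mmul N A B) (at level 40, left associativity).

Lemma tr_AR R P W : meq N (P ** R) R -> trace N (R ** (W ** P)) = trace N (R ** W).
Proof.
  intros H. rewrite <- mmul_assoc. rewrite trace_cyc. rewrite <- mmul_assoc.
  apply trace_meq. apply mmul_meq_l. auto.
Qed.
Lemma tr_AL R P W : meq N (R ** P) R -> trace N (R ** (P ** W)) = trace N (R ** W).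
Proof.
  intros H. rewrite <- mmul_assoc. apply trace_meq. apply mmul_meq_l. auto.
Qed.
Lemma tr_A1 R P : meq N (P ** R) R -> trace N (R ** P) = trace N R.
Proof. intros H. rewrite trace_cyc. apply trace_meq; auto. Qed.

Variables (R A B C : Mat).
Hypothesis HA : meq N (A ** R) R.
Hypothesis HB : meq N (B ** R) R.
Hypothesis HC : meq N (C ** R) R.
Hypothesis HA' : meq N (R ** A) R.
Hypothesis HC' : meq N (R ** C) R.
Hypothesis HB' : meq N (R ** B) R.

Lemma shape1 D : trace N (R ** (D ** (A ** (B ** (A ** C))))) = trace N (R ** D).
Proof.
  replace (D ** (A ** (B ** (A ** C)))) with ((D ** (A ** (B ** A))) ** C) by (rewrite !mmul_assoc; reflexivity).
  rewrite tr_AR by auto.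
  replace (D ** (A ** (B ** A))) with ((D ** (A ** B)) ** A) by (rewrite !mmul_assoc; reflexivity).
  rewrite tr_AR by auto.
  replace (D ** (A ** B)) with ((D ** A) ** B) by (rewrite !mmul_assoc; reflexivity).
  rewrite tr_AR by auto. rewrite tr_AR by auto. reflexivity.
Qed.
Lemma shape2 D : trace N (R ** (C ** (D ** (B ** (A ** C))))) = trace N (R ** D).
Proof.
  rewrite tr_AL by auto.
  replace (D ** (B ** (A ** C))) with ((D ** (B ** A)) ** C) by (rewrite !mmul_assoc; reflexivity).
  rewrite tr_AR by auto.
  replace (D ** (B ** A)) with ((D ** B) ** A) by (rewrite !mmul_assoc; reflexivity).
  rewrite tr_AR by auto. rewrite tr_AR by auto. reflexivity.
Qed.
Lemma shape3 D : trace N (R ** (C ** (A ** (D ** (A ** C))))) = trace N (R ** D).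
Proof.
  rewrite tr_AL by auto. rewrite tr_AL by auto.
  replace (D ** (A ** C)) with ((D ** A) ** C) by (rewrite !mmul_assoc; reflexivity).
  rewrite tr_AR by auto. rewrite tr_AR by auto. reflexivity.
Qed.
Lemma shape4 D : trace N (R ** (C ** (A ** (B ** (D ** C))))) = trace N (R ** D).
Proof.
  rewrite tr_AL by auto. rewrite tr_AL by auto. rewrite tr_AL by auto. rewrite tr_AR by auto. reflexivity.
Qed.
Lemma shape5 D : trace N (R ** (C ** (A ** (B ** (A ** D))))) = trace N (R ** D).
Proof.
  rewrite tr_AL by auto. rewrite tr_AL by auto. rewrite tr_AL by auto. rewrite tr_AL by auto. reflexivity.
Qed.
Lemma shape0 : trace N (R ** (C ** (A ** (B ** (A ** C))))) = trace N R.
Proof.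
  rewrite tr_AL by auto. rewrite tr_AL by auto. rewrite tr_AL by auto. rewrite tr_AL by auto.
  rewrite (trace_meq N (R ** C) R); auto.
Qed.
End TR.

Lemma shapeR' N R A B C : meq N (mmul N A R) R -> meq N (mmul N B R) R -> meq N (mmul N C R) R ->
  trace N (mmul N R (mmul N C (mmul N A (mmul N B (mmul N A C))))) = trace N R.
Proof.
  intros HA HB HC.
  replace (mmul N C (mmul N A (mmul N B (mmul N A C)))) with (mmul N (mmul N C (mmul N A (mmul N B A))) C)
    by (rewrite !mmul_assoc; reflexivity).
  rewrite tr_AR by auto.
  replace (mmul N C (mmul N A (mmul N B A))) with (mmul N (mmul N C (mmul N A B)) A) by (rewrite !mmul_assoc; reflexivity).
  rewrite tr_AR by auto.
  replace (mmul N C (mmul N A B)) with (mmul N (mmul N C A) B) by (rewrite !mmul_assoc; reflexivity).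
  rewrite tr_AR by auto. rewrite tr_AR by auto. apply tr_A1; auto.
Qed.
Open Scope R_scope.

Lemma mpow0_proj m X : PSD m X -> meq m (mmul m (mpow m X 0) X) X.
Proof.
  intros H. eapply meq_trans. apply mmul_meq_r. apply mfun_id; auto.
  unfold mpow. eapply meq_trans. apply mfun_mul; auto.
  rewrite (mfun_ext m X _ (fun x => x)). apply meq_sym, mfun_id; auto.
  intros k Hk. pose proof (cd_nonneg m X H k Hk). unfold rpow_supp.
  destruct (Rlt_dec 0 (cd m X k)). rewrite Rpower_O by auto. ring. lra.
Qed.

Lemma mpow1 n X : PSD n X -> meq n (mpow n X 1) X.
Proof.
  intros H. unfold mpow. rewrite (mfun_ext n X _ (fun x => x)). apply meq_sym, mfun_id; auto.
  intros k Hk. pose proof (cd_nonneg n X H k Hk). unfold rpow_supp.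
  destruct (Rlt_dec 0 (cd n X k)). rewrite Rpower_1 by auto. ring. lra.
Qed.

Lemma mvec_mmul n A B v : mvec n (mmul n A B) v = mvec n A (mvec n B v).
Proof.
  extensionality i. unfold mvec, mmul.
  rewrite (csum_ext n _ (fun k => csum n (fun l => Cmul (A i l) (Cmul (B l k) (v k))))).
  - rewrite csum_swap. apply csum_ext; intros. rewrite csum_mull. reflexivity.
  - intros. rewrite <- csum_mulr. apply csum_ext; intros. apply Cmul_assoc.
Qed.
Lemma mvec_meq n A B v i : meq n A B -> (i < n)%nat -> mvec n A v i = mvec n B v i.
Proof. intros H Hi. unfold mvec. apply csum_ext; intros. rewrite H; auto. Qed.

Lemma supp_sub_meq N rho A B : meq N A B -> supp_sub N rho A -> supp_sub N rho B.
Proof.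
  intros H S v. destruct (S v) as [w Hw]. exists w. intros i Hi. rewrite Hw by auto. apply mvec_meq; auto.
Qed.

Lemma supp_proj N m k s r g X rho : Bij N m k s r g -> PSD m X -> supp_sub N rho (gext s r X) ->
  meq N (mmul N (gext s r (mpow m X 0)) rho) rho.
Proof.
  intros HB HX S i j Hi Hj.
  destruct (S (fun l => delta l j)) as [w Hw].
  assert (E : forall l, (l < N)%nat -> rho l j = mvec N (gext s r X) w l).
  { intros l Hl. rewrite <- Hw by auto. unfold mvec. rewrite csum_delta_r; auto. }
  unfold mmul at 1. rewrite (csum_ext N _ (fun l => Cmul (gext s r (mpow m X 0) i l) (mvec N (gext s r X) w l))).
  2:{ intros; rewrite E; auto. }
  change (mvec N (gext s r (mpow m X 0)) (mvec N (gext s r X) w) i = rho i j).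
  rewrite <- mvec_mmul. rewrite E by auto.
  apply mvec_meq; auto. eapply meq_trans. apply (gext_mul N m k s r g HB).
  apply (gext_meq N m k s r g HB). apply mpow0_proj; auto.
Qed.

Lemma absorb_right N P rho : meq N (mmul N P rho) rho -> meq N (madj P) P -> meq N (madj rho) rho ->
  meq N (mmul N rho P) rho.
Proof.
  intros H1 H2 H3. eapply meq_trans. apply mmul_meq. apply meq_sym, H3. apply meq_sym, H2.
  rewrite <- madj_mmul. eapply meq_trans. apply madj_meq. apply H1. auto.
Qed.

Lemma madj_PSD n A : PSD n A -> meq n (madj A) A.
Proof. intros H i j Hi Hj. unfold madj. rewrite (PSD_herm n A H i j) by auto. apply Cconj_invol. Qed.

Lemma mfun_scale_log t' n A : mfun (fun x => t' * (ln_supp x * rpow_supp 0 x)) n A = mscale (RtoC t') (mlog n A).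
Proof.
  extensionality i; extensionality j. unfold mlog, mfun, mscale; cbv beta zeta. rewrite <- csum_mull. apply csum_ext; intros.
  replace (t' * (ln_supp (snd (chosen_decomp n A) k) * rpow_supp 0 (snd (chosen_decomp n A) k)))
    with (t' * ln_supp (snd (chosen_decomp n A) k)).
  - rewrite RtoC_mul. ceq.
  - unfold ln_supp, rpow_supp. destruct (Rlt_dec 0 _). rewrite Rpower_O by auto. ring. ring.
Qed.

Definition slotLog (dA dB dC : nat) (tau theta omega : Mat) (s : slot) : Mat :=
  match s with
  | sTau => extAC dA dB dC (mlog (dA * dC) tau)
  | sTheta => extBC dA dB dC (mlog (dB * dC) theta)
  | sOmega => extC dA dB dC (mlog dC omega)
  end.

Lemma MDv_slot dA dB dC tau theta omega S t t' : derivable_pt_lim t 1 t' -> t 1 = 0 ->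
  MDv (NABC dA dB dC) (fun a => slotPow dA dB dC tau theta omega S (t a)) (slotPow dA dB dC tau theta omega S 0)
      (mscale (RtoC t') (slotLog dA dB dC tau theta omega S)).
Proof.
  intros Ht Ht1. destruct S; simpl.
  - pose proof (MDv_gext _ _ _ _ _ _ _ _ _ (Bij_AC dA dB dC) (MDv_mfunpow (dA * dC) tau t t' Ht)) as M.
    rewrite Ht1, mfun_scale_log, gext_scale in M. exact M.
  - eapply MDv_meq. intros a; apply meq_sym, extC_g.
    pose proof (MDv_gext _ _ _ _ _ _ _ _ _ (Bij_C dA dB dC) (MDv_mfunpow dC omega t t' Ht)) as M.
    rewrite Ht1, mfun_scale_log, gext_scale in M. destruct M as [M1 M2]. split.
    + eapply meq_trans. apply M1. apply meq_sym, extC_g.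
    + intros i j Hi Hj. eapply cD_eqd. apply M2; auto. unfold mscale. rewrite extC_g; auto.
  - pose proof (MDv_gext _ _ _ _ _ _ _ _ _ (Bij_BC dA dB dC) (MDv_mfunpow (dB * dC) theta t t' Ht)) as M.
    rewrite Ht1, mfun_scale_log, gext_scale in M. exact M.
Qed.
Open Scope R_scope.

Lemma dpl_ext f g x l l' : (forall a, f a = g a) -> l = l' -> derivable_pt_lim f x l -> derivable_pt_lim g x l'.
Proof. intros H -> D. replace g with f; auto. extensionality a; auto. Qed.

Lemma dlin c : derivable_pt_lim (fun a => (1 - a) * c) 1 (- c).
Proof.
  pose proof (derivable_pt_lim_minus (fct_cte 1) id 1 0 1 (derivable_pt_lim_const 1 1) (derivable_pt_lim_id 1)) as H1.
  pose proof (derivable_pt_lim_mult _ (fct_cte c) 1 _ 0 H1 (derivable_pt_lim_const c 1)) as H2.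
  eapply dpl_ext; [|shelve|exact H2]. intros a; unfold mult_fct, minus_fct, fct_cte, id; ring.
  Unshelve. unfold minus_fct, fct_cte, id; ring.
Qed.
Lemma dlin2 c : derivable_pt_lim (fun a => (1 - a) * c / 2) 1 (- c / 2).
Proof.
  pose proof (derivable_pt_lim_scal _ (/2) 1 _ (dlin c)) as H.
  eapply dpl_ext; [|shelve|exact H]. intros a; unfold mult_real_fct; field.
  Unshelve. field.
Qed.

Lemma dlin_0 c : (fun a => (1 - a) * c) 1 = 0. Proof. cbv beta; ring. Qed.
Lemma dlin2_0 c : (fun a => (1 - a) * c / 2) 1 = 0. Proof. cbv beta. unfold Rdiv. ring. Qed.

Lemma lim_from_deriv F D : derivable_pt_lim F 1 D -> F 1 = 1 ->
  limit1_in (fun a => / (a - 1) * ln (F a)) (fun a => a <> 1) D 1.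
Proof.
  intros HD H1.
  assert (HL : derivable_pt_lim (comp ln F) 1 (/ F 1 * D)).
  { apply derivable_pt_lim_comp; auto. apply derivable_pt_lim_ln. lra. }
  rewrite H1 in HL. replace (/ 1 * D) with D in HL by field.
  intros eps Heps. destruct (HL eps Heps) as [del Hdel].
  exists del. split. apply cond_pos.
  intros x [Hx1 Hx2]. simpl in *. unfold R_dist in *.
  assert (Hh : x - 1 <> 0) by lra.
  specialize (Hdel (x - 1) Hh Hx2). unfold comp in Hdel.
  replace (1 + (x - 1)) with x in Hdel by ring. rewrite H1, ln_1 in Hdel.
  replace (/ (x - 1) * ln (F x)) with ((ln (F x) - 0) / (x - 1)) by (field; auto). exact Hdel.
Qed.

Section Main1.
Variables (dA dB dC : nat) (rho tau theta omega : Mat).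
Let N := NABC dA dB dC.
Hypothesis Hr : IsState N rho.
Hypothesis Ht : IsState (dA * dC) tau.
Hypothesis Hth : IsState (dB * dC) theta.
Hypothesis Ho : IsState dC omega.
Hypothesis S1 : supp_sub N rho (extAC dA dB dC tau).
Hypothesis S2 : supp_sub N rho (extBC dA dB dC theta).
Hypothesis S3 : supp_sub N rho (extC dA dB dC omega).

Let P S := slotPow dA dB dC tau theta omega S 0.

Lemma absL S : meq N (mmul N (P S) rho) rho.
Proof.
  destruct S; unfold P; simpl.
  - apply (supp_proj N _ _ _ _ _ tau rho (Bij_AC dA dB dC)); [apply Ht|exact S1].
  - eapply meq_trans. apply mmul_meq_l. apply extC_g.
    apply (supp_proj N _ _ _ _ _ omega rho (Bij_C dA dB dC)); [apply Ho|].
    eapply supp_sub_meq; [|exact S3]. apply extC_g.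
  - apply (supp_proj N _ _ _ _ _ theta rho (Bij_BC dA dB dC)); [apply Hth|exact S2].
Qed.

Lemma Padj S : meq N (madj (P S)) (P S).
Proof.
  destruct S; unfold P; simpl.
  - rewrite extAC_g, gext_madj. unfold mpow. rewrite madj_mfun. apply meq_refl.
  - eapply meq_trans. apply madj_meq. apply extC_g. rewrite gext_madj. unfold mpow. rewrite madj_mfun.
    apply meq_sym, extC_g.
  - rewrite extBC_g, gext_madj. unfold mpow. rewrite madj_mfun. apply meq_refl.
Qed.

Lemma absR S : meq N (mmul N rho (P S)) rho.
Proof. apply absorb_right. apply absL. apply Padj. apply madj_PSD, Hr. Qed.


Let LS S := slotLog dA dB dC tau theta omega S.
Let aS S := Re (trace N (mmul N rho (LS S))).

Lemma rho'_eq : meq N (mfun (fun x => 1 * (ln_supp x * rpow_supp 1 x)) N rho) (mmul N rho (mlog N rho)).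
Proof.
  destruct Hr as [Hp _].
  eapply meq_trans; [|apply meq_sym; eapply meq_trans; [apply mmul_meq_l; apply mfun_id; auto| apply mfun_mul; auto]].
  rewrite (mfun_ext N rho _ (fun x => x * ln_supp x)). apply meq_refl.
  intros k Hk. pose proof (cd_nonneg N rho Hp k Hk). unfold rpow_supp, ln_supp.
  destruct (Rlt_dec 0 (cd N rho k)). rewrite Rpower_1 by auto. ring. ring.
Qed.

Lemma absL' S : meq N (mmul N (P S) (mmul N rho (mlog N rho))) (mmul N rho (mlog N rho)).
Proof. rewrite <- mmul_assoc. apply mmul_meq_l. apply absL. Qed.

Lemma part1_deriv X Y Z :
  Re (trace N (mmul N (mpow N rho 1) (Kp dA dB dC tau theta omega X Y Z (1 - 1)))) = 1 /\
  derivable_pt_lim (fun a => Re (trace N (mmul N (mpow N rho a) (Kp dA dB dC tau theta omega X Y Z (1 - a))))) 1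
    (Re (trace N (mmul N rho (mlog N rho))) - esign X * aS X - esign Y * aS Y - esign Z * aS Z).
Proof.
  destruct Hr as [Hp Htr].
  set (VX := P X). set (VY := P Y). set (VZ := P Z).
  set (DX := mscale (RtoC (- esign X / 2)) (LS X)).
  set (DY := mscale (RtoC (- esign Y / 2)) (LS Y)).
  set (DZ := mscale (RtoC (- esign Z)) (LS Z)).
  set (K1 := mmul N VX (mmul N VY (mmul N VZ (mmul N VY VX)))).
  set (K' := madd (mmul N DX (mmul N VY (mmul N VZ (mmul N VY VX))))
              (mmul N VX (madd (mmul N DY (mmul N VZ (mmul N VY VX)))
                 (mmul N VY (madd (mmul N DZ (mmul N VY VX))
                    (mmul N VZ (madd (mmul N DY VX) (mmul N VY DX)))))))).
  set (rho' := mfun (fun x => 1 * (ln_supp x * rpow_supp 1 x)) N rho).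
  assert (HM : MDv N (fun a => mmul N (mpow N rho a) (Kp dA dB dC tau theta omega X Y Z (1 - a)))
                 (mmul N (mpow N rho 1) K1) (madd (mmul N rho' K1) (mmul N (mpow N rho 1) K'))).
  { unfold Kp. cbv zeta.
    apply MDv_mul. exact (MDv_mfunpow N rho (fun a => a) 1 (derivable_pt_lim_id 1)).
    apply MDv_mul. exact (MDv_slot dA dB dC tau theta omega X _ _ (dlin2 (esign X)) (dlin2_0 (esign X))).
    apply MDv_mul. exact (MDv_slot dA dB dC tau theta omega Y _ _ (dlin2 (esign Y)) (dlin2_0 (esign Y))).
    apply MDv_mul. exact (MDv_slot dA dB dC tau theta omega Z _ _ (dlin (esign Z)) (dlin_0 (esign Z))).
    apply MDv_mul. exact (MDv_slot dA dB dC tau theta omega Y _ _ (dlin2 (esign Y)) (dlin2_0 (esign Y))).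
    exact (MDv_slot dA dB dC tau theta omega X _ _ (dlin2 (esign X)) (dlin2_0 (esign X))). }
  assert (Hr1 : meq N (mpow N rho 1) rho) by (apply mpow1; auto).
  split.
  - rewrite (trace_val N _ _ _ HM). rewrite (trace_meq N _ (mmul N rho K1)) by (apply mmul_meq_l; auto).
    unfold K1. rewrite (shape0 N rho VY VZ VX) by (try apply absL; try apply absR).
    rewrite Htr. reflexivity.
  - eapply dpl_ext; [intros; reflexivity| |apply (MDv_trace N _ _ _ HM)].
    rewrite trace_add. simpl Re.
    rewrite (trace_meq N (mmul N (mpow N rho 1) K') (mmul N rho K')) by (apply mmul_meq_l; auto).
    rewrite (trace_meq N (mmul N rho' K1) (mmul N (mmul N rho (mlog N rho)) K1)) by (apply mmul_meq_l; apply rho'_eq).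
    unfold K1. rewrite (shapeR' N (mmul N rho (mlog N rho)) VY VZ VX) by apply absL'.
    unfold K'. rewrite !mmul_addr, !trace_add. simpl Re.
    unfold DX, DY, DZ. rewrite !mmul_scalel, !mmul_scaler, !trace_scale. simpl Re.
    rewrite (shape1 N rho VY VZ VX) by (try apply absL; try apply absR).
    rewrite (shape2 N rho VY VZ VX) by (try apply absL; try apply absR).
    rewrite (shape3 N rho VY VX) by (try apply absL; try apply absR).
    rewrite (shape4 N rho VY VZ VX) by (try apply absL; try apply absR).
    rewrite (shape5 N rho VY VZ VX) by (try apply absL; try apply absR).
    unfold aS. generalize (Re (trace N (mmul N rho (LS X)))) (Re (trace N (mmul N rho (LS Y)))) (Re (trace N (mmul N rho (LS Z)))) (Re (trace N (mmul N rho (mlog N rho)))) (Im (trace N (mmul N rho (LS X)))) (Im (trace N (mmul N rho (LS Y)))) (Im (trace N (mmul N rho (LS Z)))) (esign X) (esign Y) (esign Z). intros. field.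
Qed.
End Main1.

Lemma part1 dA dB dC rho tau theta omega :
  IsState (NABC dA dB dC) rho -> IsState (dA * dC) tau -> IsState (dB * dC) theta -> IsState dC omega ->
  supp_sub (NABC dA dB dC) rho (extAC dA dB dC tau) ->
  supp_sub (NABC dA dB dC) rho (extBC dA dB dC theta) ->
  supp_sub (NABC dA dB dC) rho (extC dA dB dC omega) ->
  forall X Y Z : slot, X <> Y -> Y <> Z -> X <> Z ->
    limit1_in (DeltaQ_alpha dA dB dC rho tau theta omega X Y Z) (fun a => a <> 1)
      (DeltaQ dA dB dC rho tau theta omega) 1.
Proof.
  intros Hr Ht Hth Ho S1 S2 S3 X Y Z HXY HYZ HXZ.
  destruct (part1_deriv dA dB dC rho tau theta omega Hr Ht Hth Ho S1 S2 S3 X Y Z) as [H1 H2].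
  unfold DeltaQ_alpha.
  apply (lim_from_deriv (fun a => Re (trace (NABC dA dB dC) (mmul (NABC dA dB dC) (mpow (NABC dA dB dC) rho a)
            (Kp dA dB dC tau theta omega X Y Z (1 - a)))))); [|exact H1].
  eapply dpl_ext; [intros; reflexivity| |exact H2].
  unfold DeltaQ. rewrite !mmul_addr, !mmul_oppr, !trace_add, !trace_opp. simpl Re.
  destruct X, Y, Z; try congruence; simpl slotLog; simpl esign; ring.
Qed.
Open Scope R_scope.

Definition mzero : Mat := fun _ _ => C0.
Lemma mmul_oppl n A B : mmul n (mopp A) B = mopp (mmul n A B).
Proof.
  extensionality i; extensionality j; unfold mmul, mopp.
  induction n; simpl. ceq. rewrite IHn. ceq.
Qed.

Lemma trace_adj_zero n B : Re (trace n (mmul n (madj B) B)) = 0 -> meq n B mzero.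
Proof.
  intros H i j Hi Hj. unfold trace, mmul, madj in H.
  assert (Hin : forall a, (a < n)%nat -> Im (csum n (fun k => Cmul (Cconj (B k a)) (B k a))) = 0 /\
                                   0 <= Re (csum n (fun k => Cmul (Cconj (B k a)) (B k a)))).
  { intros a Ha. apply csum_real_nonneg. intros k Hk. simpl. split. ring. nra. }
  pose proof (csum_nonneg_zero n _ (fun a Ha => proj2 (Hin a Ha)) H j Hj) as Hj0. simpl in Hj0.
  assert (Hk : forall k, (k < n)%nat -> 0 <= Re (Cmul (Cconj (B k j)) (B k j))) by (intros; simpl; nra).
  pose proof (csum_nonneg_zero n _ Hk Hj0 i Hi) as Hi0. simpl in Hi0.
  unfold mzero. destruct (B i j) as [x y]. simpl in Hi0. apply Ceq; simpl; nra.
Qed.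

Lemma madj_gext_mpow s r m X t : madj (gext s r (mpow m X t)) = gext s r (mpow m X t).
Proof. rewrite gext_madj. unfold mpow. rewrite madj_mfun. reflexivity. Qed.

Definition inv_supp (x : R) : R := if Rlt_dec 0 x then / x else 0.

Section Supp.
Variables (N m k : nat) (s r : nat -> nat) (g : nat -> nat -> nat).
Hypothesis HB : Bij N m k s r g.
Variable rho : Mat.
Hypothesis Hr : PSD N rho.

Let M := pmarg k g rho.
Let HM : PSD m M := pmarg_PSD N m k s r g HB rho Hr.
Let Pe := gext s r (mpow m M 0).
Let rh := mpow N rho (1/2).

Lemma Pe_idem : meq N (mmul N Pe Pe) Pe.
Proof.
  eapply meq_trans. apply (gext_mul N m k s r g HB). apply (gext_meq N m k s r g HB).
  unfold mpow. eapply meq_trans. apply mfun_mul; auto. rewrite (mfun_ext m M _ (rpow_supp 0)). apply meq_refl.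
  intros. unfold rpow_supp. destruct (Rlt_dec 0 _). rewrite Rpower_O by auto. ring. ring.
Qed.

Lemma rh_sq : meq N (mmul N rh rh) rho.
Proof.
  unfold rh, mpow. eapply meq_trans. apply mfun_mul; auto. rewrite (mfun_ext N rho _ (fun x => x)).
  apply meq_sym, mfun_id; auto.
  intros j Hj. pose proof (cd_nonneg N rho Hr j Hj). unfold rpow_supp.
  destruct (Rlt_dec 0 _). rewrite <- Rpower_plus. replace (1/2 + 1/2) with 1 by field. apply Rpower_1; auto. lra.
Qed.

Lemma tr_rhoPe : trace N (mmul N rho Pe) = trace N rho.
Proof.
  unfold Pe. rewrite (ptrace N m k s r g HB). fold M.
  rewrite (trace_meq m _ (mmul m (mfun (fun x => x) m M) (mpow m M 0))) by (apply mmul_meq_l; apply mfun_id; auto).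
  unfold mpow. rewrite (trace_meq m _ (mfun (fun x => x * rpow_supp 0 x) m M)) by (apply mfun_mul; auto).
  rewrite (mfun_ext m M _ (fun x => x)).
  - rewrite <- (trace_meq m M) by (apply mfun_id; auto). unfold M. apply (pmarg_trace N m k s r g HB).
  - intros j Hj. pose proof (cd_nonneg m M HM j Hj). unfold rpow_supp.
    destruct (Rlt_dec 0 _). rewrite Rpower_O by auto. ring. lra.
Qed.

Lemma rhoPe : meq N (mmul N rho Pe) rho.
Proof.
  set (B := madd rh (mopp (mmul N rh Pe))).
  assert (HBz : meq N B mzero).
  { apply trace_adj_zero.
    assert (E : madj B = madd rh (mopp (mmul N Pe rh))).
    { unfold B. extensionality i; extensionality j. unfold madj, madd, mopp.
      rewrite Cconj_add. f_equal. change (madj rh i j = rh i j). unfold rh, mpow. rewrite madj_mfun. reflexivity.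
      replace (Cconj (Copp (mmul N rh Pe j i))) with (Copp (Cconj (mmul N rh Pe j i))) by ceq. f_equal.
      change (madj (mmul N rh Pe) i j = mmul N Pe rh i j). rewrite madj_mmul.
      unfold Pe, rh. rewrite madj_gext_mpow. unfold mpow. rewrite madj_mfun. reflexivity. }
    rewrite E. unfold B. rewrite !mmul_addr, !mmul_addl, !mmul_oppr, !mmul_oppl, !trace_add, !trace_opp.
    assert (T1 : trace N (mmul N rh rh) = trace N rho) by (apply trace_meq, rh_sq).
    assert (T2 : trace N (mmul N rh (mmul N rh Pe)) = trace N rho).
    { rewrite <- mmul_assoc. rewrite <- tr_rhoPe. apply trace_meq, mmul_meq_l, rh_sq. }
    assert (T3 : trace N (mmul N (mmul N Pe rh) rh) = trace N rho).
    { rewrite mmul_assoc, trace_cyc. rewrite <- tr_rhoPe. apply trace_meq, mmul_meq_l, rh_sq. }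
    assert (T4 : trace N (mmul N (mmul N Pe rh) (mmul N rh Pe)) = trace N rho).
    { rewrite mmul_assoc, <- (mmul_assoc N rh rh Pe), trace_cyc, mmul_assoc. rewrite <- tr_rhoPe.
      apply trace_meq, mmul_meq. apply rh_sq. apply Pe_idem. }
    rewrite T1, T2, T3, T4. simpl. ring. }
  assert (H1 : meq N rh (mmul N rh Pe)).
  { intros i j Hi Hj. pose proof (HBz i j Hi Hj) as Z. unfold B, madd, mopp, mzero in Z.
    destruct (rh i j), (mmul N rh Pe i j). injection Z; intros; apply Ceq; simpl; lra. }
  eapply meq_trans; [|apply rh_sq].
  eapply meq_trans. apply mmul_meq_l. apply meq_sym, rh_sq.
  rewrite mmul_assoc. apply mmul_meq_r. apply meq_sym, H1.
Qed.

Lemma Pe_rho : meq N (mmul N Pe rho) rho.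
Proof.
  pose proof (madj_PSD N rho Hr) as Ha.
  eapply meq_trans. apply mmul_meq_r. apply meq_sym, Ha.
  unfold Pe. rewrite <- (madj_gext_mpow s r m M 0). rewrite <- madj_mmul.
  eapply meq_trans. apply madj_meq. apply rhoPe. auto.
Qed.

Lemma supp_marg : supp_sub N rho (gext s r M).
Proof.
  intros v. exists (mvec N (gext s r (mfun inv_supp m M)) (mvec N rho v)).
  intros i Hi. rewrite <- (mvec_mmul N (gext s r M)).
  rewrite (mvec_meq N (mmul N (gext s r M) (gext s r (mfun inv_supp m M))) Pe _ i); [ | | exact Hi].
  - rewrite <- mvec_mmul. symmetry. apply mvec_meq; auto. apply Pe_rho.
  - eapply meq_trans. apply (gext_mul N m k s r g HB). unfold Pe. apply (gext_meq N m k s r g HB).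
    eapply meq_trans. apply mmul_meq_l. apply mfun_id; auto.
    eapply meq_trans. apply mfun_mul; auto. unfold mpow. rewrite (mfun_ext m M _ (rpow_supp 0)). apply meq_refl.
    intros j Hj. unfold rpow_supp, inv_supp. destruct (Rlt_dec 0 _). rewrite Rpower_O by auto. field. lra. ring.
Qed.
End Supp.
Open Scope R_scope.

Theorem mainTheorem7 :
  forall (dA dB dC : nat) (rho : Mat),
    IsState (NABC dA dB dC) rho ->
    (forall (tau theta omega : Mat),
        IsState (dA * dC) tau -> IsState (dB * dC) theta -> IsState dC omega ->
        supp_sub (NABC dA dB dC) rho (extAC dA dB dC tau) ->
        supp_sub (NABC dA dB dC) rho (extBC dA dB dC theta) ->
        supp_sub (NABC dA dB dC) rho (extC dA dB dC omega) ->
        forall X Y Z : slot, X <> Y -> Y <> Z -> X <> Z ->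
          limit1_in (DeltaQ_alpha dA dB dC rho tau theta omega X Y Z) (fun a => a <> 1)
            (DeltaQ dA dB dC rho tau theta omega) 1)
    /\
    limit1_in (DeltaQ_alpha dA dB dC rho (margAC dA dB dC rho) (margBC dA dB dC rho)
                 (margC dA dB dC rho) sTau sOmega sTheta) (fun a => a <> 1)
      (CMI dA dB dC rho) 1.
Proof.
  intros dA dB dC rho Hr. split.
  - intros. apply part1; auto.
  - destruct Hr as [Hp Htr].
    assert (H1 : IsState (dA * dC) (margAC dA dB dC rho)).
    { rewrite margAC_g. split. apply (pmarg_PSD _ _ _ _ _ _ (Bij_AC dA dB dC)); auto.
      rewrite (pmarg_trace _ _ _ _ _ _ (Bij_AC dA dB dC)); auto. }
    assert (H2 : IsState (dB * dC) (margBC dA dB dC rho)).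
    { rewrite margBC_g. split. apply (pmarg_PSD _ _ _ _ _ _ (Bij_BC dA dB dC)); auto.
      rewrite (pmarg_trace _ _ _ _ _ _ (Bij_BC dA dB dC)); auto. }
    assert (H3 : IsState dC (margC dA dB dC rho)).
    { rewrite margC_g. split. apply (pmarg_PSD _ _ _ _ _ _ (Bij_C dA dB dC)); auto.
      rewrite (pmarg_trace _ _ _ _ _ _ (Bij_C dA dB dC)); auto. }
    assert (S1 : supp_sub (NABC dA dB dC) rho (extAC dA dB dC (margAC dA dB dC rho))).
    { rewrite extAC_g, margAC_g. apply (supp_marg _ _ _ _ _ _ (Bij_AC dA dB dC)); auto. }
    assert (S2 : supp_sub (NABC dA dB dC) rho (extBC dA dB dC (margBC dA dB dC rho))).
    { rewrite extBC_g, margBC_g. apply (supp_marg _ _ _ _ _ _ (Bij_BC dA dB dC)); auto. }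
    assert (S3 : supp_sub (NABC dA dB dC) rho (extC dA dB dC (margC dA dB dC rho))).
    { eapply supp_sub_meq. apply meq_sym, extC_g. rewrite margC_g. apply (supp_marg _ _ _ _ _ _ (Bij_C dA dB dC)); auto. }
    replace (CMI dA dB dC rho) with (DeltaQ dA dB dC rho (margAC dA dB dC rho) (margBC dA dB dC rho) (margC dA dB dC rho)).
    + apply part1; auto; try split; auto; discriminate.
    + unfold DeltaQ, CMI, entropy. rewrite !mmul_addr, !mmul_oppr, !trace_add, !trace_opp.
      rewrite extAC_g, extBC_g, (ptrace _ _ _ _ _ _ (Bij_AC dA dB dC)), (ptrace _ _ _ _ _ _ (Bij_BC dA dB dC)).
      rewrite (trace_meq _ (mmul _ rho (extC dA dB dC _)) (mmul _ rho (gext (ixC dA dB dC) (ixAB dA dB dC) (mlog dC (margC dA dB dC rho)))))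
        by (apply mmul_meq_r, extC_g).
      rewrite (ptrace _ _ _ _ _ _ (Bij_C dA dB dC)).
      rewrite <- margAC_g, <- margBC_g, <- margC_g. simpl Re. ring.
Qed.
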